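(* Let $X$ and $Y$ be terms in normal form and let $f$ be a binary constructor (one of $\mathsf{sign},\mathsf{blind},\langle\cdot,\cdot\rangle,\{\cdot\}_\cdot$). If $\Gamma,f(X,Y)\vdash M$ has a cut-free derivation in $\mathcal S$, then so does $\Gamma,X,Y\vdash M$.
   Context: Fix names, variables and constructors $\mathsf{pub}$ (unary), $\mathsf{sign},\mathsf{blind},\langle\cdot,\cdot\rangle,\{\cdot\}_\cdot$ (binary). $E$ is the union of AC-convergent equational theories $E_1,\dots,E_n$ with pairwise disjoint signatures, disjoint from the constructors, each with at most one associative-commutative (AC) binary symbol $\oplus_i$; $E$ is presented by a rewrite system $R_E$ terminating and confluent modulo AC; $\Sigma_E$ is its signature. Terms are ground terms over names, the constructors and $\Sigma_E$; normal form means $R_E$-normal form modulo AC. $\equiv$ is equality modulo AC of all $\oplus_i$; $\approx_E$ equality modulo $E$. Guarded term: a name, a variable, or headed by a constructor. $E$-context: term with holes built only from symbols of $\Sigma_E$. Sequents $\Gamma\vdash M$ have all terms in normal form; $\Gamma,M$ means $\Gamma\cup\{M\}$. A derivation is cut-free if it has no instance of (cut). System $\mathcal S$: (id) $\Gamma\vdash M$ with no premise if $M\approx_E C[M_1,\dots,M_k]$ for an $E$-context $C$ and $M_i\in\Gamma$; (cut) from $\Gamma\vdash M$, $\Gamma,M\vdash T$ infer $\Gamma\vdash T$; ($p_L$) from $\Gamma,\langle M,N\rangle,M,N\vdash T$ infer $\Gamma,\langle M,N\rangle\vdash T$; ($p_R$) from $\Gamma\vdash M,\Gamma\vdash N$ infer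 $\Gamma\vdash\langle M,N\rangle$; ($e_L$) from $\Gamma,\{M\}_K\vdash K$ and $\Gamma,\{M\}_K,M,K\vdash N$ infer $\Gamma,\{M\}_K\vdash N$; ($e_R$) from $\Gamma\vdash M,\Gamma\vdash K$ infer $\Gamma\vdash\{M\}_K$; ($\mathsf{sign}_L$) from $\Gamma,\mathsf{sign}(M,K),\mathsf{pub}(L),M\vdash N$ infer $\Gamma,\mathsf{sign}(M,K),\mathsf{pub}(L)\vdash N$ if $K\equiv L$; ($\mathsf{sign}_R$) from $\Gamma\vdash M,\Gamma\vdash K$ infer $\Gamma\vdash\mathsf{sign}(M,K)$; ($\mathsf{blind}_{L1}$) from $\Gamma,\mathsf{blind}(M,K)\vdash K$ and $\Gamma,\mathsf{blind}(M,K),M,K\vdash N$ infer $\Gamma,\mathsf{blind}(M,K)\vdash N$; ($\mathsf{blind}_R$) from $\Gamma\vdash M,\Gamma\vdash K$ infer $\Gamma\vdash\mathsf{blind}(M,K)$; ($\mathsf{blind}_{L2}$) from $\Gamma,\mathsf{sign}(\mathsf{blind}(M,R),K)\vdash R$ and $\Gamma,\mathsf{sign}(\mathsf{blind}(M,R),K),\mathsf{sign}(M,K),R\vdash N$ infer $\Gamma,\mathsf{sign}(\mathsf{blind}(M,R),K)\vdash N$; ($gs$) from $\Gamma\vdash A$, $\Gamma,A\vdash M$ infer $\Gamma\vdash M$ if $A$ is a guarded subterm of a term in $\Gamma\cup\{M\}$. *)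

(* Defs.v *)
(* Sequent system S for Dolev-Yao deduction with blind
   signatures, modulo an equational theory E = E_1 u ... u E_n presented
   by a rewrite system R_E that is terminating and confluent modulo AC. *)
From Stdlib Require Import List Relations.
Import ListNotations.

Inductive term (S : Type) : Type :=
| Nm (a : nat)
| Vr (x : nat)                       (* variables (rules, contexts) *)
| Pub (t : term S)
| Sign (m k : term S)
| Blind (m k : term S)
| Pair (m n : term S)
| Enc (m k : term S)
| App (f : S) (args : list (term S)).

Arguments Nm {S}. Arguments Vr {S}. Arguments Pub {S}. Arguments Sign {S}.
Arguments Blind {S}. Arguments Pair {S}. Arguments Enc {S}. Arguments App {S}.

Inductive bcons := BSign | BBlind | BPair | BEnc.

Definition bapp {S} (f : bcons) (x y : term S) : term S :=
  match f with
  | BSign => Sign x y | BBlind => Blind x y | BPair => Pair x y | BEnc => Enc x y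
  end.

Fixpoint subst {S} (s : nat -> term S) (t : term S) : term S :=
  match t with
  | Nm a => Nm a
  | Vr x => s x
  | Pub u => Pub (subst s u)
  | Sign u v => Sign (subst s u) (subst s v)
  | Blind u v => Blind (subst s u) (subst s v)
  | Pair u v => Pair (subst s u) (subst s v)
  | Enc u v => Enc (subst s u) (subst s v)
  | App f l => App f (map (subst s) l)
  end.

Inductive occurs {S} (x : nat) : term S -> Prop :=
| oc_var : occurs x (Vr x)
| oc_pub t : occurs x t -> occurs x (Pub t)
| oc_sign1 t u : occurs x t -> occurs x (Sign t u)
| oc_sign2 t u : occurs x u -> occurs x (Sign t u)
| oc_blind1 t u : occurs x t -> occurs x (Blind t u)
| oc_blind2 t u : occurs x u -> occurs x (Blind t u)
| oc_pair1 t u : occurs x t -> occurs x (Pair t u)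
| oc_pair2 t u : occurs x u -> occurs x (Pair t u)
| oc_enc1 t u : occurs x t -> occurs x (Enc t u)
| oc_enc2 t u : occurs x u -> occurs x (Enc t u)
| oc_app f l t : In t l -> occurs x t -> occurs x (App f l).

Definition ground {S} (t : term S) : Prop := forall x, ~ occurs x t.

Inductive subterm {S} (a : term S) : term S -> Prop :=
| st_refl : subterm a a
| st_pub t : subterm a t -> subterm a (Pub t)
| st_sign1 t u : subterm a t -> subterm a (Sign t u)
| st_sign2 t u : subterm a u -> subterm a (Sign t u)
| st_blind1 t u : subterm a t -> subterm a (Blind t u)
| st_blind2 t u : subterm a u -> subterm a (Blind t u)
| st_pair1 t u : subterm a t -> subterm a (Pair t u)
| st_pair2 t u : subterm a u -> subterm a (Pair t u)
| st_enc1 t u : subterm a t -> subterm a (Enc t u)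
| st_enc2 t u : subterm a u -> subterm a (Enc t u)
| st_app f l t : In t l -> subterm a t -> subterm a (App f l).

Definition guarded {S} (t : term S) : Prop :=
  match t with App _ _ => False | _ => True end.

Inductive ctxc {S} (r : relation (term S)) : relation (term S) :=
| cc_base t s : r t s -> ctxc r t s
| cc_pub t s : ctxc r t s -> ctxc r (Pub t) (Pub s)
| cc_sign1 t s u : ctxc r t s -> ctxc r (Sign t u) (Sign s u)
| cc_sign2 t s u : ctxc r t s -> ctxc r (Sign u t) (Sign u s)
| cc_blind1 t s u : ctxc r t s -> ctxc r (Blind t u) (Blind s u)
| cc_blind2 t s u : ctxc r t s -> ctxc r (Blind u t) (Blind u s)
| cc_pair1 t s u : ctxc r t s -> ctxc r (Pair t u) (Pair s u)
| cc_pair2 t s u : ctxc r t s -> ctxc r (Pair u t) (Pair u s)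
| cc_enc1 t s u : ctxc r t s -> ctxc r (Enc t u) (Enc s u)
| cc_enc2 t s u : ctxc r t s -> ctxc r (Enc u t) (Enc u s)
| cc_app f l1 l2 t s : ctxc r t s -> ctxc r (App f (l1 ++ t :: l2)) (App f (l1 ++ s :: l2)).

Record Etheory := {
  sym  : Type;
  ar   : sym -> nat;
  th   : sym -> nat;                  (* f belongs to the signature of E_(th f) *)
  isAC : sym -> Prop;
  rules : list (term sym * term sym)
}.

Section E.
Variable E : Etheory.
Notation T := (term (sym E)).

Inductive wf : T -> Prop :=
| wf_nm a : wf (Nm a)
| wf_vr x : wf (Vr x)
| wf_pub t : wf t -> wf (Pub t)
| wf_sign t u : wf t -> wf u -> wf (Sign t u)
| wf_blind t u : wf t -> wf u -> wf (Blind t u)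
| wf_pair t u : wf t -> wf u -> wf (Pair t u)
| wf_enc t u : wf t -> wf u -> wf (Enc t u)
| wf_app f l : length l = ar E f -> Forall wf l -> wf (App f l).

Inductive eterm (P : nat -> Prop) : T -> Prop :=
| et_vr x : eterm P (Vr x)
| et_app f l : P (th E f) -> Forall (eterm P) l -> eterm P (App f l).

(* E-context: built only from symbols of Sigma_E, holes being variables *)
Definition ectx (C : T) : Prop := wf C /\ eterm (fun _ => True) C.

Inductive acroot : relation T :=
| ac_assoc f x y z : isAC E f ->
    acroot (App f [App f [x; y]; z]) (App f [x; App f [y; z]])
| ac_assoc' f x y z : isAC E f ->
    acroot (App f [x; App f [y; z]]) (App f [App f [x; y]; z])
| ac_comm f x y : isAC E f -> acroot (App f [x; y]) (App f [y; x]).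

Definition aceq : relation T := clos_refl_sym_trans T (ctxc acroot).

Definition rroot (t s : T) : Prop :=
  exists l r (sg : nat -> T), In (l, r) (rules E) /\ t = subst sg l /\ s = subst sg r.

Definition rstep : relation T := ctxc rroot.

Definition rmod (t s : T) : Prop :=
  exists t' s', aceq t t' /\ rstep t' s' /\ aceq s' s.

Definition normal (t : T) : Prop := ~ exists s, rmod t s.

Definition eqE : relation T :=
  clos_refl_sym_trans T (fun t s => rstep t s \/ ctxc acroot t s).

End E.

Arguments wf {E}. Arguments ectx {E}. Arguments aceq {E}. Arguments rmod {E}.
Arguments normal {E}. Arguments eqE {E}.

Definition E_ok (E : Etheory) : Prop :=
  (forall f, isAC E f -> ar E f = 2) /\
  (forall f g, isAC E f -> isAC E g -> th E f = th E g -> f = g) /\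
  (* R_E is the union of rewrite systems for the E_i: every rule is
     built from variables and the symbols of a single E_i, is
     well-formed, its left side is not a variable, and its right side
     has no new variables *)
  (forall l r, In (l, r) (rules E) ->
     (exists i, eterm E (fun j => j = i) l /\ eterm E (fun j => j = i) r) /\
     wf l /\ wf r /\ (forall x, l <> Vr x) /\
     (forall x, occurs x r -> occurs x l)) /\
  (forall t : term (sym E), wf t -> Acc (fun s u => rmod u s) t) /\
  (forall t s1 s2 : term (sym E), wf t ->
     clos_refl_trans _ rmod t s1 -> clos_refl_trans _ rmod t s2 ->
     exists u1 u2, clos_refl_trans _ rmod s1 u1 /\
                   clos_refl_trans _ rmod s2 u2 /\ aceq u1 u2).

Section Seq.
Variable E : Etheory.
Notation T := (term (sym E)).

Definition okterm (t : T) : Prop := ground t /\ wf t /\ normal t.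
Definition wfseq (G : list T) (M : T) : Prop := Forall okterm G /\ okterm M.

(* Contexts Gamma are finite sets represented by lists; "Gamma, M" is
   M :: Gamma.  A rule whose conclusion is "Gamma, P |- N" is stated for
   any list containing P.  [der cut G M]: G |- M is derivable, using
   (cut) only if [cut = true]. *)
Inductive der (cut : bool) : list T -> T -> Prop :=
| d_id G M : wfseq G M ->
    (exists (C : T) (sg : nat -> T), ectx C /\
        (forall x, occurs x C -> In (sg x) G) /\ eqE M (subst sg C)) ->
    der cut G M
| d_cut G M N : cut = true -> wfseq G N ->
    der cut G M -> der cut (M :: G) N -> der cut G N
| d_pL G M N P : wfseq G P -> In (Pair M N) G ->
    der cut (M :: N :: G) P -> der cut G P
| d_pR G M N : wfseq G (Pair M N) ->
    der cut G M -> der cut G N -> der cut G (Pair M N)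
| d_eL G M K N : wfseq G N -> In (Enc M K) G ->
    der cut G K -> der cut (M :: K :: G) N -> der cut G N
| d_eR G M K : wfseq G (Enc M K) ->
    der cut G M -> der cut G K -> der cut G (Enc M K)
| d_signL G M K L N : wfseq G N -> In (Sign M K) G -> In (Pub L) G ->
    aceq K L -> der cut (M :: G) N -> der cut G N
| d_signR G M K : wfseq G (Sign M K) ->
    der cut G M -> der cut G K -> der cut G (Sign M K)
| d_blindL1 G M K N : wfseq G N -> In (Blind M K) G ->
    der cut G K -> der cut (M :: K :: G) N -> der cut G N
| d_blindR G M K : wfseq G (Blind M K) ->
    der cut G M -> der cut G K -> der cut G (Blind M K)
| d_blindL2 G M R K N : wfseq G N -> In (Sign (Blind M R) K) G ->
    der cut G R -> der cut (Sign M K :: R :: G) N -> der cut G N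
| d_gs G A M : wfseq G M -> guarded A ->
    (exists B, (In B G \/ B = M) /\ subterm A B) ->
    der cut G A -> der cut (A :: G) M -> der cut G M.

Definition cf_derivable (G : list T) (M : T) : Prop := der false G M.

End Seq.

Arguments cf_derivable {E}.

(* Main.v *)
Require Import Defs.
From Stdlib Require Import List Relations ClassicalEpsilon PeanoNat Lia.
Import ListNotations.

Definition term_ind' {S : Type} (P : term S -> Prop)
  (Hnm : forall a, P (Nm a)) (Hvr : forall x, P (Vr x))
  (Hpub : forall t, P t -> P (Pub t))
  (Hsign : forall t u, P t -> P u -> P (Sign t u))
  (Hblind : forall t u, P t -> P u -> P (Blind t u))
  (Hpair : forall t u, P t -> P u -> P (Pair t u))
  (Henc : forall t u, P t -> P u -> P (Enc t u))
  (Happ : forall f l, Forall P l -> P (App f l)) : forall t, P t :=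
  fix F t := match t with
  | Nm a => Hnm a | Vr x => Hvr x | Pub u => Hpub u (F u)
  | Sign u v => Hsign u v (F u) (F v) | Blind u v => Hblind u v (F u) (F v)
  | Pair u v => Hpair u v (F u) (F v) | Enc u v => Henc u v (F u) (F v)
  | App f l => Happ f l ((fix G l := match l return Forall P l with
       | [] => Forall_nil _ | x :: l' => Forall_cons _ (F x) (G l') end) l)
  end.


Lemma crst_lift {A} (R : relation A) (F : A -> A) :
  (forall s t, R s t -> R (F s) (F t)) ->
  forall s t, clos_refl_sym_trans A R s t -> clos_refl_sym_trans A R (F s) (F t).
Proof.
  intros HF s t H; induction H.
  - apply rst_step; auto.
  - apply rst_refl.
  - apply rst_sym; auto.
  - eapply rst_trans; eauto.
Qed.

Definition ctxF {S} (F : term S -> term S) : Prop :=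
  forall (r : relation (term S)) s t, ctxc r s t -> ctxc r (F s) (F t).

Lemma eqE_lift {E} (F : term (sym E) -> term (sym E)) : ctxF F ->
  forall s t, eqE s t -> eqE (F s) (F t).
Proof.
  intros HF. apply crst_lift. intros s t [H|H]; [left|right]; apply HF; exact H.
Qed.

Lemma aceq_lift {E} (F : term (sym E) -> term (sym E)) : ctxF F ->
  forall s t, aceq s t -> aceq (F s) (F t).
Proof.
  intros HF. apply crst_lift. intros s t H; apply HF; exact H.
Qed.

Lemma ctxF_pub {S} : ctxF (@Pub S). Proof. intros r s t H; now constructor. Qed.
Lemma ctxF_sign1 {S} (u : term S) : ctxF (fun x => Sign x u). Proof. intros r s t H; now constructor. Qed.
Lemma ctxF_sign2 {S} (u : term S) : ctxF (fun x => Sign u x). Proof. intros r s t H; now constructor. Qed.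
Lemma ctxF_blind1 {S} (u : term S) : ctxF (fun x => Blind x u). Proof. intros r s t H; now constructor. Qed.
Lemma ctxF_blind2 {S} (u : term S) : ctxF (fun x => Blind u x). Proof. intros r s t H; now constructor. Qed.
Lemma ctxF_pair1 {S} (u : term S) : ctxF (fun x => Pair x u). Proof. intros r s t H; now constructor. Qed.
Lemma ctxF_pair2 {S} (u : term S) : ctxF (fun x => Pair u x). Proof. intros r s t H; now constructor. Qed.
Lemma ctxF_enc1 {S} (u : term S) : ctxF (fun x => Enc x u). Proof. intros r s t H; now constructor. Qed.
Lemma ctxF_enc2 {S} (u : term S) : ctxF (fun x => Enc u x). Proof. intros r s t H; now constructor. Qed.
Lemma ctxF_app {S} f (l1 l2 : list (term S)) : ctxF (fun x => App f (l1 ++ x :: l2)).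
Proof. intros r s t H; now constructor. Qed.

Lemma eqE_trans {E} (a b c : term (sym E)) : eqE a b -> eqE b c -> eqE a c.
Proof. apply rst_trans. Qed.
Lemma eqE_sym {E} (a b : term (sym E)) : eqE a b -> eqE b a.
Proof. apply rst_sym. Qed.
Lemma eqE_refl {E} (a : term (sym E)) : eqE a a.
Proof. apply rst_refl. Qed.

Lemma aceq_eqE {E} (a b : term (sym E)) : aceq a b -> eqE a b.
Proof. intro H; induction H; [apply rst_step; right; auto | apply rst_refl | apply rst_sym; auto | eapply rst_trans; eauto]. Qed.

Lemma eqE_bin {E} (F : term (sym E) -> term (sym E) -> term (sym E)) :
  (forall u, ctxF (fun x => F x u)) -> (forall u, ctxF (fun x => F u x)) ->
  forall a a' b b', eqE a a' -> eqE b b' -> eqE (F a b) (F a' b').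
Proof.
  intros H1 H2 a a' b b' Ha Hb.
  eapply eqE_trans. apply (eqE_lift (fun x => F x b)); eauto.
  apply (eqE_lift (fun x => F a' x)); eauto.
Qed.

Lemma eqE_app_list {E} f (l l' : list (term (sym E))) : Forall2 eqE l l' ->
  forall pre, eqE (App f (pre ++ l)) (App f (pre ++ l')).
Proof.
  induction 1; intros pre.
  - apply eqE_refl.
  - eapply eqE_trans.
    + apply (eqE_lift (fun z => App f (pre ++ z :: l))). apply ctxF_app. exact H.
    + specialize (IHForall2 (pre ++ [y])). rewrite <- !app_assoc in IHForall2. exact IHForall2.
Qed.
Lemma eqE_subst {E} (s1 s2 : nat -> term (sym E)) :
  (forall x, eqE (s1 x) (s2 x)) -> forall C, eqE (subst s1 C) (subst s2 C).
Proof.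
  intros Hs C; induction C using term_ind'; simpl; try apply eqE_refl; auto.
  - apply (eqE_lift Pub ctxF_pub); auto.
  - apply eqE_bin; auto; [apply ctxF_sign1|apply ctxF_sign2].
  - apply eqE_bin; auto; [apply ctxF_blind1|apply ctxF_blind2].
  - apply eqE_bin; auto; [apply ctxF_pair1|apply ctxF_pair2].
  - apply eqE_bin; auto; [apply ctxF_enc1|apply ctxF_enc2].
  - apply (eqE_app_list f _ _) with (pre := []).
    induction H; simpl; constructor; auto.
Qed.

Lemma subterm_occurs {S} (A B : term S) x : subterm A B -> occurs x A -> occurs x B.
Proof. induction 1; intros; try assumption. all: try (econstructor; eauto; fail). Qed.

Lemma subterm_wf {E} (A B : term (sym E)) : subterm A B -> wf B -> wf A.
Proof.
  induction 1; intros Hw; inversion Hw; subst; auto.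
  apply IHsubterm. rewrite Forall_forall in *; auto.
Qed.

Lemma normal_lift {E} (F : term (sym E) -> term (sym E)) : ctxF F ->
  forall t, normal (F t) -> normal t.
Proof.
  intros HF t Hn [s [t' [s' [H1 [H2 H3]]]]]. apply Hn.
  exists (F s), (F t'), (F s'). split; [|split].
  - apply aceq_lift; auto.
  - apply HF; exact H2.
  - apply aceq_lift; auto.
Qed.

Lemma subterm_normal {E} (A B : term (sym E)) : subterm A B -> normal B -> normal A.
Proof.
  induction 1; intros Hn; auto; apply IHsubterm.
  all: match goal with
  | Hn : normal (Pub ?a) |- normal ?a => exact (normal_lift _ ctxF_pub _ Hn)
  | Hn : normal (Sign ?a ?b) |- normal ?a => exact (normal_lift _ (ctxF_sign1 b) _ Hn)
  | Hn : normal (Sign ?b ?a) |- normal ?a => exact (normal_lift _ (ctxF_sign2 b) _ Hn)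
  | Hn : normal (Blind ?a ?b) |- normal ?a => exact (normal_lift _ (ctxF_blind1 b) _ Hn)
  | Hn : normal (Blind ?b ?a) |- normal ?a => exact (normal_lift _ (ctxF_blind2 b) _ Hn)
  | Hn : normal (Pair ?a ?b) |- normal ?a => exact (normal_lift _ (ctxF_pair1 b) _ Hn)
  | Hn : normal (Pair ?b ?a) |- normal ?a => exact (normal_lift _ (ctxF_pair2 b) _ Hn)
  | Hn : normal (Enc ?a ?b) |- normal ?a => exact (normal_lift _ (ctxF_enc1 b) _ Hn)
  | Hn : normal (Enc ?b ?a) |- normal ?a => exact (normal_lift _ (ctxF_enc2 b) _ Hn)
  | _ => idtac end.
  destruct (in_split _ _ H) as [l1 [l2 ->]].
  eapply normal_lift; [apply ctxF_app|exact Hn].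
Qed.

Lemma subterm_ok {E} (A B : term (sym E)) : subterm A B -> okterm E B -> okterm E A.
Proof.
  intros H [Hg [Hw Hn]]; split; [|split].
  - intros x Ho; eapply Hg, subterm_occurs; eauto.
  - eapply subterm_wf; eauto.
  - eapply subterm_normal; eauto.
Qed.

Lemma bapp_sub1 {S} f (X Y : term S) : subterm X (bapp f X Y).
Proof. destruct f; simpl; constructor; constructor. Qed.
Lemma bapp_sub2 {S} f (X Y : term S) : subterm Y (bapp f X Y).
Proof. destruct f; simpl; constructor; constructor. Qed.

Lemma der_wf {E} cut G M : der E cut G M -> wfseq E G M.
Proof. destruct 1; auto. Qed.

Fixpoint clean {E} (t : term (sym E)) : term (sym E) :=
  match t with
  | App f l => if Nat.eqb (length l) (ar E f) then App f (map clean l) else Nm 0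
  | Pub u => Pub (clean u)
  | Sign u v => Sign (clean u) (clean v)
  | Blind u v => Blind (clean u) (clean v)
  | Pair u v => Pair (clean u) (clean v)
  | Enc u v => Enc (clean u) (clean v)
  | x => x
  end.

Lemma clean_wf {E} (t : term (sym E)) : wf (clean t).
Proof.
  induction t using term_ind'; simpl; try constructor; auto.
  destruct (Nat.eqb (length l) (ar E f)) eqn:Hl; [|constructor].
  apply Nat.eqb_eq in Hl. constructor. now rewrite length_map.
  apply Forall_map. exact H.
Qed.

Lemma map_id_Forall {A} (g : A -> A) l : Forall (fun u => g u = u) l -> map g l = l.
Proof. induction 1; simpl; congruence. Qed.

Lemma clean_id {E} (t : term (sym E)) : wf t -> clean t = t.
Proof.
  induction t using term_ind'; intros Hw; inversion Hw; subst; simpl; f_equal; auto.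
  rewrite H2, Nat.eqb_refl. f_equal. apply map_id_Forall.
  rewrite Forall_forall in *; auto.
Qed.

Lemma clean_subst {E} (sg : nat -> term (sym E)) (l : term (sym E)) : wf l ->
  clean (subst sg l) = subst (fun x => clean (sg x)) l.
Proof.
  induction l using term_ind'; intros Hw; inversion Hw; subst; simpl; f_equal; auto.
  rewrite length_map, H2, Nat.eqb_refl. f_equal. rewrite map_map.
  apply map_ext_in. intros a Ha. rewrite Forall_forall in *; auto.
Qed.

Lemma clean_ctxc {E} (r : relation (term (sym E))) :
  (forall s t, r s t -> r (clean s) (clean t)) ->
  forall s t, ctxc r s t -> clean s = clean t \/ ctxc r (clean s) (clean t).
Proof.
  intros Hr s t H; induction H; simpl;
  try (destruct IHctxc as [IH|IH]; [left; congruence | right; constructor; exact IH]).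
  - right; constructor; auto.
  - rewrite !length_app; simpl.
    destruct (Nat.eqb _ _); [|left; reflexivity].
    rewrite !map_app; simpl.
    destruct IHctxc as [IH|IH]; [left; congruence | right; constructor; exact IH].
Qed.

Lemma clean_rroot {E} (HE : E_ok E) (s t : term (sym E)) : rroot E s t -> rroot E (clean s) (clean t).
Proof.
  intros [l [r [sg [Hin [-> ->]]]]].
  destruct HE as [_ [_ [Hr _]]]. destruct (Hr _ _ Hin) as [_ [Hwl [Hwr _]]].
  exists l, r, (fun x => clean (sg x)). split; auto. split; apply clean_subst; auto.
Qed.

Lemma clean_acroot {E} (HE : E_ok E) (s t : term (sym E)) : acroot E s t -> acroot E (clean s) (clean t).
Proof.
  destruct HE as [Har _].
  intros H; destruct H; simpl; rewrite (Har f H); simpl; constructor; auto.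
Qed.

Definition wstep {E} (a b : term (sym E)) : Prop :=
  wf a /\ wf b /\ (rstep E a b \/ ctxc (acroot E) a b).

Lemma eqE_wclean {E} (HE : E_ok E) (s t : term (sym E)) :
  eqE s t -> clos_refl_sym_trans _ wstep (clean s) (clean t).
Proof.
  induction 1.
  - destruct H as [H|H].
    + destruct (clean_ctxc _ (clean_rroot HE) _ _ H) as [e|e]; [rewrite e; apply rst_refl|].
      apply rst_step. split; [apply clean_wf|split; [apply clean_wf|left; exact e]].
    + destruct (clean_ctxc _ (clean_acroot HE) _ _ H) as [e|e]; [rewrite e; apply rst_refl|].
      apply rst_step. split; [apply clean_wf|split; [apply clean_wf|right; exact e]].
  - apply rst_refl.
  - apply rst_sym; auto.
  - eapply rst_trans; eauto.
Qed.

Definition rmods {E} := clos_refl_trans (term (sym E)) rmod.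

Lemma rmod_transfer {E} (u1 u2 v : term (sym E)) : aceq u1 u2 -> rmods u1 v ->
  exists v', rmods u2 v' /\ aceq v v'.
Proof.
  intros Ha H. apply clos_rt_rt1n in H. destruct H.
  - exists u2; split; [apply rt_refl|exact Ha].
  - exists z; split; [|apply rst_refl].
    eapply rt_trans; [apply rt_step|apply clos_rt1n_rt; exact H0].
    destruct H as [t' [s' [H1 [H2 H3]]]]. exists t', s'. split; auto.
    eapply rst_trans; [apply rst_sym; exact Ha|exact H1].
Qed.

Lemma CR {E} (HE : E_ok E) (a b : term (sym E)) :
  clos_refl_sym_trans _ wstep a b ->
  exists u1 u2, rmods a u1 /\ rmods b u2 /\ aceq u1 u2.
Proof.
  intros H; apply clos_rst_rst1n in H. induction H.
  - exists x, x; repeat split; apply rt_refl || apply rst_refl.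
  - destruct IHclos_refl_sym_trans_1n as [u1 [u2 [Hy [Hz Hu]]]].
    destruct H as [[Hwx [Hwy [Hs|Hs]]]|[Hwy [Hwx [Hs|Hs]]]].
    + exists u1, u2; repeat split; auto. eapply rt_trans; [apply rt_step|exact Hy].
      exists x, y; repeat split; auto; apply rst_refl.
    + destruct (rmod_transfer y x u1) as [v [Hv1 Hv2]]; auto.
      apply rst_sym, rst_step; exact Hs.
      exists v, u2; repeat split; auto. eapply rst_trans; [apply rst_sym; exact Hv2|exact Hu].
    + destruct HE as [_ [_ [_ [_ Hcf]]]].
      assert (Hyx : rmods y x) by (apply rt_step; exists y, x; repeat split; auto; apply rst_refl).
      destruct (Hcf y x u1 Hwy Hyx Hy) as [v1 [v2 [Hv1 [Hv2 Hv]]]].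
      destruct (rmod_transfer u1 u2 v2 Hu Hv2) as [v' [Hv'1 Hv'2]].
      exists v1, v'; repeat split; auto. eapply rt_trans; eauto.
      eapply rst_trans; eauto.
    + destruct (rmod_transfer y x u1) as [v [Hv1 Hv2]]; auto.
      apply rst_step; exact Hs.
      exists v, u2; repeat split; auto. eapply rst_trans; [apply rst_sym; exact Hv2|exact Hu].
Qed.

Lemma normal_rmods {E} (a u : term (sym E)) : normal a -> rmods a u -> u = a.
Proof.
  intros Hn H. apply clos_rt_rt1n in H. destruct H; auto.
  exfalso; apply Hn; eauto.
Qed.

Lemma normal_eq_aceq {E} (HE : E_ok E) (a b : term (sym E)) :
  wf a -> wf b -> normal a -> normal b -> eqE a b -> aceq a b.
Proof.
  intros Wa Wb Na Nb H. apply (eqE_wclean HE) in H. rewrite !clean_id in H by auto.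
  destruct (CR HE _ _ H) as [u1 [u2 [H1 [H2 H3]]]].
  apply normal_rmods in H1; apply normal_rmods in H2; auto. subst; auto.
Qed.

Lemma acstep_bapp {E} (s t : term (sym E)) : ctxc (acroot E) s t -> forall f X Y,
  (s = bapp f X Y -> exists A1 A2, t = bapp f A1 A2 /\ aceq X A1 /\ aceq Y A2) /\
  (t = bapp f X Y -> exists A1 A2, s = bapp f A1 A2 /\ aceq X A1 /\ aceq Y A2).
Proof.
  intros H f X Y. destruct H; destruct f; simpl; split; intro Heq; try discriminate;
  try (destruct H; discriminate);
  injection Heq; intros; subst; do 2 eexists; split; try reflexivity;
  split; first [apply rst_refl | apply rst_step; assumption | apply rst_sym, rst_step; assumption].
Qed.

Lemma aceq_bapp {E} f (X Y A : term (sym E)) : aceq (bapp f X Y) A ->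
  exists A1 A2, A = bapp f A1 A2 /\ aceq X A1 /\ aceq Y A2.
Proof.
  intros H; apply clos_rst_rst1n in H. remember (bapp f X Y) as s eqn:Hs.
  revert X Y Hs. induction H; intros X Y Hs.
  - subst. exists X, Y; repeat split; apply rst_refl.
  - destruct H as [H|H].
    + destruct (proj1 (acstep_bapp _ _ H f X Y) Hs) as [B1 [B2 [Hy [H1 H2]]]].
      destruct (IHclos_refl_sym_trans_1n _ _ Hy) as [A1 [A2 [Hz [H3 H4]]]].
      exists A1, A2; repeat split; auto; eapply rst_trans; eauto.
    + destruct (proj2 (acstep_bapp _ _ H f X Y) Hs) as [B1 [B2 [Hy [H1 H2]]]].
      destruct (IHclos_refl_sym_trans_1n _ _ Hy) as [A1 [A2 [Hz [H3 H4]]]].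
      exists A1, A2; repeat split; auto; eapply rst_trans; eauto.
Qed.

Definition bad {E} (U : term (sym E) -> Prop) (t : term (sym E)) : Prop :=
  exists r, U r /\ eqE t r.

Lemma bad_eq {E} U (s t : term (sym E)) : eqE s t -> bad U s -> bad U t.
Proof. intros H [r [Hr Hs]]; exists r; split; auto; eapply eqE_trans; [apply eqE_sym; exact H|exact Hs]. Qed.

Fixpoint hmap {E} (U : term (sym E) -> Prop) (w0 : term (sym E)) (t : term (sym E)) : term (sym E) :=
  match t with
  | App f l => App f (map (hmap U w0) l)
  | Nm a => if excluded_middle_informative (bad U (Nm a)) then w0 else Nm a
  | Vr x => if excluded_middle_informative (bad U (Vr x)) then w0 else Vr x
  | Pub u => if excluded_middle_informative (bad U (Pub u)) then w0 else Pub (hmap U w0 u)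
  | Sign u v => if excluded_middle_informative (bad U (Sign u v)) then w0 else Sign (hmap U w0 u) (hmap U w0 v)
  | Blind u v => if excluded_middle_informative (bad U (Blind u v)) then w0 else Blind (hmap U w0 u) (hmap U w0 v)
  | Pair u v => if excluded_middle_informative (bad U (Pair u v)) then w0 else Pair (hmap U w0 u) (hmap U w0 v)
  | Enc u v => if excluded_middle_informative (bad U (Enc u v)) then w0 else Enc (hmap U w0 u) (hmap U w0 v)
  end.

Lemma h_subst {E} U w0 P (sg : nat -> term (sym E)) (l : term (sym E)) : eterm E P l ->
  hmap U w0 (subst sg l) = subst (fun x => hmap U w0 (sg x)) l.
Proof.
  induction l using term_ind'; intros He; inversion He; subst; simpl; auto.
  f_equal. rewrite map_map. apply map_ext_in. intros a Ha. rewrite Forall_forall in *; auto.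
Qed.

Ltac hcase :=
  match goal with
  |- context [excluded_middle_informative ?P] =>
     destruct (excluded_middle_informative P) end.

Lemma h_ctxc {E} U w0 (r : relation (term (sym E))) :
  (forall s t, r s t -> eqE (hmap U w0 s) (hmap U w0 t)) ->
  (forall s t, ctxc r s t -> eqE s t) ->
  forall s t, ctxc r s t -> eqE (hmap U w0 s) (hmap U w0 t).
Proof.
  intros Hr Hr2 s t H. pose proof (Hr2 _ _ H) as Heq. induction H.
  - auto.
  - simpl. hcase; hcase; try apply eqE_refl.
    + exfalso; apply n, (bad_eq _ _ _ Heq); auto.
    + exfalso; apply n, (bad_eq _ _ _ (eqE_sym _ _ Heq)); auto.
    + apply (eqE_lift _ ctxF_pub); auto.
  - simpl. hcase; hcase; try apply eqE_refl.
    + exfalso; apply n, (bad_eq _ _ _ Heq); auto.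
    + exfalso; apply n, (bad_eq _ _ _ (eqE_sym _ _ Heq)); auto.
    + apply (eqE_lift _ (ctxF_sign1 _)); auto.
  - simpl. hcase; hcase; try apply eqE_refl.
    + exfalso; apply n, (bad_eq _ _ _ Heq); auto.
    + exfalso; apply n, (bad_eq _ _ _ (eqE_sym _ _ Heq)); auto.
    + apply (eqE_lift _ (ctxF_sign2 _)); auto.
  - simpl. hcase; hcase; try apply eqE_refl.
    + exfalso; apply n, (bad_eq _ _ _ Heq); auto.
    + exfalso; apply n, (bad_eq _ _ _ (eqE_sym _ _ Heq)); auto.
    + apply (eqE_lift _ (ctxF_blind1 _)); auto.
  - simpl. hcase; hcase; try apply eqE_refl.
    + exfalso; apply n, (bad_eq _ _ _ Heq); auto.
    + exfalso; apply n, (bad_eq _ _ _ (eqE_sym _ _ Heq)); auto.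
    + apply (eqE_lift _ (ctxF_blind2 _)); auto.
  - simpl. hcase; hcase; try apply eqE_refl.
    + exfalso; apply n, (bad_eq _ _ _ Heq); auto.
    + exfalso; apply n, (bad_eq _ _ _ (eqE_sym _ _ Heq)); auto.
    + apply (eqE_lift _ (ctxF_pair1 _)); auto.
  - simpl. hcase; hcase; try apply eqE_refl.
    + exfalso; apply n, (bad_eq _ _ _ Heq); auto.
    + exfalso; apply n, (bad_eq _ _ _ (eqE_sym _ _ Heq)); auto.
    + apply (eqE_lift _ (ctxF_pair2 _)); auto.
  - simpl. hcase; hcase; try apply eqE_refl.
    + exfalso; apply n, (bad_eq _ _ _ Heq); auto.
    + exfalso; apply n, (bad_eq _ _ _ (eqE_sym _ _ Heq)); auto.
    + apply (eqE_lift _ (ctxF_enc1 _)); auto.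
  - simpl. hcase; hcase; try apply eqE_refl.
    + exfalso; apply n, (bad_eq _ _ _ Heq); auto.
    + exfalso; apply n, (bad_eq _ _ _ (eqE_sym _ _ Heq)); auto.
    + apply (eqE_lift _ (ctxF_enc2 _)); auto.
  - simpl. rewrite !map_app; simpl. apply (eqE_lift _ (ctxF_app _ _ _)); auto.
Qed.

Lemma h_eqE {E} (HE : E_ok E) U w0 (s t : term (sym E)) : eqE s t -> eqE (hmap U w0 s) (hmap U w0 t).
Proof.
  induction 1.
  - destruct H as [H|H].
    + apply (h_ctxc U w0 (rroot E)); auto.
      * intros a b [l [r [sg [Hin [-> ->]]]]].
        destruct HE as [_ [_ [Hr _]]]. destruct (Hr _ _ Hin) as [[i [Hl Hr']] _].
        rewrite (h_subst U w0 _ _ _ Hl), (h_subst U w0 _ _ _ Hr').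
        apply rst_step; left; apply cc_base. exists l, r, (fun x => hmap U w0 (sg x)); auto.
      * intros a b Hab; apply rst_step; left; exact Hab.
    + apply (h_ctxc U w0 (acroot E)); auto.
      * intros a b Hab; destruct Hab; simpl; apply rst_step; right; apply cc_base; constructor; auto.
      * intros a b Hab; apply rst_step; right; exact Hab.
  - apply eqE_refl.
  - apply eqE_sym; auto.
  - eapply eqE_trans; eauto.
Qed.

Lemma h_id {E} U w0 (t : term (sym E)) :
  (forall A, guarded A -> subterm A t -> ~ bad U A) -> hmap U w0 t = t.
Proof.
  induction t using term_ind'; intros Hg; simpl;
  try (hcase; [exfalso; eapply Hg; [ | apply st_refl | eassumption]; exact I|]).
  all: try reflexivity.
  - f_equal; apply IHt; intros A HA Hs; apply (Hg A HA); eauto using st_pub, st_sign1, st_sign2, st_blind1, st_blind2, st_pair1, st_pair2, st_enc1, st_enc2.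
  - f_equal; [apply IHt1|apply IHt2]; intros A HA Hs; apply (Hg A HA); eauto using st_pub, st_sign1, st_sign2, st_blind1, st_blind2, st_pair1, st_pair2, st_enc1, st_enc2.
  - f_equal; [apply IHt1|apply IHt2]; intros A HA Hs; apply (Hg A HA); eauto using st_pub, st_sign1, st_sign2, st_blind1, st_blind2, st_pair1, st_pair2, st_enc1, st_enc2.
  - f_equal; [apply IHt1|apply IHt2]; intros A HA Hs; apply (Hg A HA); eauto using st_pub, st_sign1, st_sign2, st_blind1, st_blind2, st_pair1, st_pair2, st_enc1, st_enc2.
  - f_equal; [apply IHt1|apply IHt2]; intros A HA Hs; apply (Hg A HA); eauto using st_pub, st_sign1, st_sign2, st_blind1, st_blind2, st_pair1, st_pair2, st_enc1, st_enc2.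
  - f_equal. apply map_id_Forall. rewrite Forall_forall in *.
    intros x Hx; apply H; auto. intros A HA Hs; apply Hg; auto. eapply st_app; eauto.
Qed.

Lemma h_bad {E} U w0 (t : term (sym E)) : guarded t -> bad U t -> hmap U w0 t = w0.
Proof.
  destruct t; simpl; intros Hg Hb; try contradiction; hcase; auto; contradiction.
Qed.

Definition covered {E} (G : list (term (sym E))) (t : term (sym E)) : Prop :=
  exists f X Y, t = bapp f X Y /\ In X G /\ In Y G.
Definition repr {E} (G : list (term (sym E))) (r : term (sym E)) : Prop :=
  exists a, In a G /\ eqE a r.

Lemma covered_mono {E} (G1 G2 : list (term (sym E))) t :
  (forall x, In x G1 -> In x G2) -> covered G1 t -> covered G2 t.
Proof. intros H [f [X [Y [-> [H1 H2]]]]]; exists f, X, Y; auto. Qed.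

Lemma der_var {E} (G : list (term (sym E))) X A : In X G -> Forall (okterm E) G ->
  okterm E A -> eqE A X -> der E false G A.
Proof.
  intros Hin Hok HA Heq. apply d_id. split; auto.
  exists (Vr 0), (fun _ => X). split; [split; constructor|split].
  - intros; exact Hin.
  - exact Heq.
Qed.

Lemma okterm_bapp {E} f (X Y : term (sym E)) : okterm E (bapp f X Y) -> okterm E X /\ okterm E Y.
Proof. intros H; split; eapply subterm_ok; [apply bapp_sub1|exact H|apply bapp_sub2|exact H]. Qed.

Lemma derive_alien {E} (HE : E_ok E) (G : list (term (sym E))) A r :
  Forall (okterm E) G -> okterm E A -> covered G r -> okterm E r -> eqE A r -> der E false G A.
Proof.
  intros Hok HA [f [X [Y [-> [HX HY]]]]] Hr Heq.
  destruct HA as [Ga [Wa Na]]. pose proof Hr as [Gr [Wr Nr]].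
  assert (Hac : aceq (bapp f X Y) A) by (apply normal_eq_aceq; auto; apply eqE_sym; auto).
  destruct (aceq_bapp f X Y A Hac) as [A1 [A2 [-> [H1 H2]]]].
  assert (HA : okterm E (bapp f A1 A2)) by (split; auto).
  destruct (okterm_bapp _ _ _ HA) as [Ok1 Ok2].
  destruct (okterm_bapp _ _ _ Hr) as [OkX OkY].
  assert (D1 : der E false G A1) by (apply (der_var G X); auto; apply eqE_sym, aceq_eqE; auto).
  assert (D2 : der E false G A2) by (apply (der_var G Y); auto; apply eqE_sym, aceq_eqE; auto).
  destruct f; simpl in *; constructor; auto; split; auto.
Qed.

Lemma id_final {E} (HE : E_ok E) (G' : list (term (sym E))) M C sg :
  wfseq E G' M -> ectx C -> (forall x, occurs x C -> In (sg x) G') -> eqE M (subst sg C) ->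
  forall L G'', Forall (okterm E) G'' ->
  (forall t, In t G' -> In t G'' \/ (covered G'' t /\ (In t L \/ repr G'' t))) ->
  ~ (exists A r, guarded A /\ (exists B, (In B G'' \/ B = M) /\ subterm A B) /\
       In r G' /\ ~ In r G'' /\ ~ repr G'' r /\ eqE A r) ->
  der E false G'' M.
Proof.
  intros [HG' HM] [WC EC] Hsg Heq L G'' Hok Hinv Hno.
  set (U := fun r => In r G' /\ ~ In r G'' /\ ~ repr G'' r).
  set (pickrep := fun t => match excluded_middle_informative (repr G'' t) with
     | left H => proj1_sig (constructive_indefinite_description _ H) | right _ => t end).
  set (sg1 := fun x => if excluded_middle_informative (In (sg x) G'') then sg x else pickrep (sg x)).
  assert (Hsg1a : forall x, eqE (sg x) (sg1 x)).
  { intro x; unfold sg1, pickrep.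
    destruct (excluded_middle_informative (In (sg x) G'')); [apply eqE_refl|].
    destruct (excluded_middle_informative (repr G'' (sg x))); [|apply eqE_refl].
    destruct (constructive_indefinite_description _ r) as [a [Hi0 Ha]]; simpl; apply eqE_sym; auto. }
  assert (Hsg1b : forall x, occurs x C -> In (sg1 x) G'' \/ U (sg1 x)).
  { intros x Hx; unfold sg1, pickrep.
    destruct (excluded_middle_informative (In (sg x) G'')); [left; auto|].
    destruct (excluded_middle_informative (repr G'' (sg x))).
    - destruct (constructive_indefinite_description _ r) as [a [Ha Hi0]]; simpl; left; auto.
    - right; split; auto. }
  assert (Heq1 : eqE M (subst sg1 C)) by (eapply eqE_trans; [exact Heq|apply eqE_subst; auto]).
  set (w0 := hd (Nm 0) G'').
  set (h := hmap U w0).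
  assert (Hnb : forall B, In B G'' \/ B = M -> hmap U w0 B = B).
  { intros B HB; apply h_id. intros A HA Hs [r [Ur Hr]]. apply Hno.
    exists A, r. destruct Ur as [U1 [U2 U3]]. repeat split; eauto. }
  pose proof (h_eqE HE U w0 _ _ Heq1) as Hh.
  rewrite (Hnb M (or_intror eq_refl)) in Hh.
  rewrite (h_subst U w0 _ sg1 C EC) in Hh.
  apply d_id; [split; auto|].
  exists C, (fun x => hmap U w0 (sg1 x)). split; [split; auto|split; auto].
  intros x Hx. destruct (Hsg1b x Hx) as [Hin|HU].
  - rewrite Hnb; auto.
  - pose proof HU as [U1 [U2 U3]]. destruct (Hinv _ U1) as [Hin|[Hcov _]]; [contradiction|].
    destruct Hcov as [f [X [Y [Hf [HX HY]]]]].
    rewrite h_bad.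
    + unfold w0; destruct G'' as [|a l]; [contradiction|left; reflexivity].
    + rewrite Hf; destruct f; exact I.
    + exists (sg1 x); split; [exact HU|apply eqE_refl].
Qed.

Lemma id_loop {E} (HE : E_ok E) (G' : list (term (sym E))) M C sg :
  wfseq E G' M -> ectx C -> (forall x, occurs x C -> In (sg x) G') -> eqE M (subst sg C) ->
  forall n L G'', length L <= n -> Forall (okterm E) G'' ->
  (forall t, In t G' -> In t G'' \/ (covered G'' t /\ (In t L \/ repr G'' t))) ->
  der E false G'' M.
Proof.
  intros Hw HC Hsg Heq n. induction n; intros L G'' Hlen Hok Hinv;
  (destruct (classic (exists A r, guarded A /\ (exists B, (In B G'' \/ B = M) /\ subterm A B) /\
       In r G' /\ ~ In r G'' /\ ~ repr G'' r /\ eqE A r)) as [Hyes|Hno];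
   [|eapply id_final; eauto]).
  - destruct Hyes as [A [r [_ [_ [Hr [Hr2 [Hr3 _]]]]]]].
    destruct (Hinv _ Hr) as [?|[_ [HL|?]]]; try contradiction.
    destruct L; [contradiction|simpl in Hlen; exfalso; apply (Nat.nle_succ_0 _ Hlen)].
  - destruct Hyes as [A [r [HgA [[B [HB HsB]] [Hr [Hr2 [Hr3 HAr]]]]]]].
    destruct (Hinv _ Hr) as [?|[Hcov [HL|?]]]; try contradiction.
    destruct (in_split _ _ HL) as [L1 [L2 ->]].
    destruct Hw as [HG' HM].
    assert (OkB : okterm E B) by (destruct HB as [HB|<-]; auto; rewrite Forall_forall in Hok; auto).
    assert (OkA : okterm E A) by (eapply subterm_ok; eauto).
    assert (Okr : okterm E r) by (rewrite Forall_forall in HG'; auto).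
    apply d_gs with A; [split; auto|exact HgA|exists B; split; auto| |].
    + eapply derive_alien; eauto.
    + apply IHn with (L1 ++ L2).
      * rewrite length_app in *; simpl in Hlen; lia.
      * constructor; auto.
      * intros t Ht. destruct (Hinv t Ht) as [H|[Hc H]]; [left; right; auto|right].
        split; [eapply covered_mono; [|exact Hc]; intros; right; auto|].
        destruct H as [H|[a [Ha1 Ha2]]].
        -- apply in_app_or in H. destruct H as [H|[H|H]].
           ++ left; apply in_or_app; auto.
           ++ subst; right; exists A; split; [left; auto|auto].
           ++ left; apply in_or_app; auto.
        -- right; exists a; split; [right|]; auto.
Qed.

Ltac binj Heq := let f := match type of Heq with _ = bapp ?f _ _ => f end in
  destruct f; simpl in Heq; try discriminate Heq; injection Heq; intros; subst.

Lemma main {E} (HE : E_ok E) (G' : list (term (sym E))) M : der E false G' M ->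
  forall G'', Forall (okterm E) G'' -> (forall t, In t G' -> In t G'' \/ covered G'' t) ->
  der E false G'' M.
Proof.
  induction 1; intros G'' Hok Hcov.
  - destruct H0 as [C [sg [HC [Hsg Heq]]]].
    apply (id_loop HE G M C sg H HC Hsg Heq (length G) G G''); auto.
    intros t Ht; destruct (Hcov t Ht) as [?|?]; auto.
  - discriminate.
  -
    destruct (der_wf _ _ _ H1) as [HF _]. inversion HF as [|? ? OkM HF2]; inversion HF2 as [|? ? OkN _].
    destruct (Hcov _ H0) as [Hin|[f [X [Y [Heq [HX HY]]]]]].
    + apply d_pL with M N; [split; [auto|apply H]|auto|].
      apply IHder; [constructor; auto|].
      intros t [<-|[<-|Ht]]; [left; left; auto|left; right; left; auto|].
      destruct (Hcov t Ht) as [?|?]; [left; right; right; auto|right].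
      eapply covered_mono; [|eassumption]; intros; right; right; auto.
    + binj Heq. apply IHder; auto.
      intros t [<-|[<-|Ht]]; auto.
  - apply d_pR; auto. split; auto. apply H.
  -
    destruct (der_wf _ _ _ H2) as [HF _]. inversion HF as [|? ? OkM HF2]; inversion HF2 as [|? ? OkN _].
    destruct (Hcov _ H0) as [Hin|[f [X [Y [Heq [HX HY]]]]]].
    + apply d_eL with M K; [split; [auto|apply H]|auto|auto|].
      apply IHder2; [constructor; auto|].
      intros t [<-|[<-|Ht]]; [left; left; auto|left; right; left; auto|].
      destruct (Hcov t Ht) as [?|?]; [left; right; right; auto|right].
      eapply covered_mono; [|eassumption]; intros; right; right; auto.
    + binj Heq. apply IHder2; auto.
      intros t [<-|[<-|Ht]]; auto.
  - apply d_eR; auto. split; auto. apply H.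
  -
    destruct (der_wf _ _ _ H3) as [HF _]. inversion HF as [|? ? OkM _].
    assert (HP : In (Pub L) G'').
    { destruct (Hcov _ H1) as [?|[f [X [Y [Heq _]]]]]; auto. destruct f; discriminate. }
    destruct (Hcov _ H0) as [Hin|[f [X [Y [Heq [HX HY]]]]]].
    + apply d_signL with M K L; auto. split; [auto|apply H].
      apply IHder; [constructor; auto|].
      intros t [<-|Ht]; [left; left; auto|].
      destruct (Hcov t Ht) as [?|?]; [left; right; auto|right].
      eapply covered_mono; [|eassumption]; intros; right; auto.
    + binj Heq. apply IHder; auto.
      intros t [<-|Ht]; auto.
  - apply d_signR; auto. split; auto. apply H.
  -
    destruct (der_wf _ _ _ H2) as [HF _]. inversion HF as [|? ? OkM HF2]; inversion HF2 as [|? ? OkN _].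
    destruct (Hcov _ H0) as [Hin|[f [X [Y [Heq [HX HY]]]]]].
    + apply d_blindL1 with M K; [split; [auto|apply H]|auto|auto|].
      apply IHder2; [constructor; auto|].
      intros t [<-|[<-|Ht]]; [left; left; auto|left; right; left; auto|].
      destruct (Hcov t Ht) as [?|?]; [left; right; right; auto|right].
      eapply covered_mono; [|eassumption]; intros; right; right; auto.
    + binj Heq. apply IHder2; auto.
      intros t [<-|[<-|Ht]]; auto.
  - apply d_blindR; auto. split; auto. apply H.
  -
    destruct (der_wf _ _ _ H2) as [HF _]. inversion HF as [|? ? OkS HF2]; inversion HF2 as [|? ? OkR _].
    destruct (okterm_bapp BSign M K OkS) as [OkM OkK].
    destruct (Hcov _ H0) as [Hin|[f [X [Y [Heq [HX HY]]]]]].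
    + apply d_blindL2 with M R K; [split; [auto|apply H]|auto|auto|].
      apply IHder2; [constructor; auto|].
      intros t [<-|[<-|Ht]]; [left; left; auto|left; right; left; auto|].
      destruct (Hcov t Ht) as [?|?]; [left; right; right; auto|right].
      eapply covered_mono; [|eassumption]; intros; right; right; auto.
    + binj Heq. apply d_blindL1 with M R; [split; [auto|apply H]|auto|auto|].
      apply IHder2; [constructor; auto|].
      intros t [<-|[<-|Ht]].
      * right. exists BSign, M, Y. repeat split; [left|right; right]; auto.
      * left; right; left; auto.
      * destruct (Hcov t Ht) as [?|?]; [left; right; right; auto|right].
        eapply covered_mono; [|eassumption]; intros; right; right; auto.
  -
    destruct (der_wf _ _ _ H3) as [HF _]. inversion HF as [|? ? OkA _].
    destruct H1 as [B [[HB|HB] HsB]].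
    + destruct (Hcov _ HB) as [Hin|[f [X [Y [Heq [HX HY]]]]]].
      * apply d_gs with A; [split; [auto|apply H]|auto|exists B; auto|auto|].
        apply IHder2; [constructor; auto|].
        intros t [<-|Ht]; [left; left; auto|].
        destruct (Hcov t Ht) as [?|?]; [left; right; auto|right].
        eapply covered_mono; [|eassumption]; intros; right; auto.
      * subst B.
        assert (Hc : A = bapp f X Y \/ subterm A X \/ subterm A Y)
          by (destruct f; simpl in HsB; inversion HsB; subst; auto).
        destruct Hc as [->|[Hs|Hs]].
        -- apply IHder2; auto. intros t [<-|Ht]; [right; exists f, X, Y; auto|auto].
        -- apply d_gs with A; [split; [auto|apply H]|auto|exists X; auto|auto|].
           apply IHder2; [constructor; auto|].
           intros t [<-|Ht]; [left; left; auto|].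
           destruct (Hcov t Ht) as [?|?]; [left; right; auto|right].
           eapply covered_mono; [|eassumption]; intros; right; auto.
        -- apply d_gs with A; [split; [auto|apply H]|auto|exists Y; auto|auto|].
           apply IHder2; [constructor; auto|].
           intros t [<-|Ht]; [left; left; auto|].
           destruct (Hcov t Ht) as [?|?]; [left; right; auto|right].
           eapply covered_mono; [|eassumption]; intros; right; auto.
    + apply d_gs with A; [split; [auto|apply H]|auto|exists B; auto|auto|].
      apply IHder2; [constructor; auto|].
      intros t [<-|Ht]; [left; left; auto|].
      destruct (Hcov t Ht) as [?|?]; [left; right; auto|right].
      eapply covered_mono; [|eassumption]; intros; right; auto.
Qed.

Theorem lemma2 (E : Etheory) (HE : E_ok E) (f : bcons)
  (G : list (term (sym E))) (X Y M : term (sym E)) :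
  normal X -> normal Y ->
  cf_derivable (bapp f X Y :: G) M ->
  cf_derivable (X :: Y :: G) M.
Proof.
  intros _ _ H. unfold cf_derivable in *.
  destruct (der_wf _ _ _ H) as [HF _]. inversion HF as [|? ? Ok HG]; subst.
  destruct (okterm_bapp _ _ _ Ok) as [OkX OkY].
  apply (main HE _ _ H); [constructor; auto|].
  intros t [<-|Ht]; [right; exists f, X, Y; repeat split; [left|right; left]; auto|].
  left; right; right; auto.
Qed.
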